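(* Let $G=(V,E)$ be an undirected graph with $V=\{v_1,\ldots,v_n\}$, $n\geq 3$, and let $r,g,b$ be three distinct constants. For $1\leq i<j\leq n$ let $r_{ij}=\{(x,y)\in\{r,g,b\}^2 : x\neq y\}$ if $\{v_i,v_j\}\in E$ and $r_{ij}=\{r,g,b\}^2$ otherwise. Let $\rho$ be the constraint with scope $(X_1,\ldots,X_n)$ whose relation contains, for each pair $i<j$ and each $(x,y)\in r_{ij}$, exactly one tuple $t$ with $t[X_i]=x$, $t[X_j]=y$ and $t[X_\ell]=d_t$ for all $\ell\notin\{i,j\}$, where the constants $d_t$ are pairwise distinct, distinct from $r,g,b$, and each $d_t$ occurs only in the tuple $t$ (and nothing else is in the relation). Then $sol(\Pi_{S_2}(\rho))\neq\rho$ if and only if $G$ is 3-colorable.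
   Context: For a constraint $\rho$ and a set $W$ of its variables, $\Pi_W(\rho)$ is the projection of $\rho$ onto $W$. $S_2$ is the set of all nonempty subsets of the variables of $\rho$ of size at most $2$, and $\Pi_{S_2}(\rho)$ is the constraint network over the variables of $\rho$ with constraints $\Pi_W(\rho)$ for $W\in S_2$. For a network $N$, $sol(N)$ is the set of assignments to all variables whose restriction to every constraint scope lies in the corresponding relation (the natural join of the relations). A graph is 3-colorable if there is a map $V\to\{r,g,b\}$ assigning distinct colors to the endpoints of every edge. *)

(* Defs.v *)
From HB Require Import structures.
From mathcomp Require Import all_boot.
Set Implicit Arguments. Unset Strict Implicit. Unset Printing Implicit Defensive.

Inductive color := Cr | Cg | Cb.
Definition color_eqb (x y : color) : bool :=
  match x, y with Cr, Cr | Cg, Cg | Cb, Cb => true | _, _ => false end.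
Lemma color_eqP : Equality.axiom color_eqb.
Proof. by case; case; constructor. Qed.
HB.instance Definition _ := hasDecEq.Build color color_eqP.

Definition simple_graph (n : nat) (e : rel 'I_n) : Prop :=
  symmetric e /\ irreflexive e.

Definition three_colorable (n : nat) (e : rel 'I_n) : Prop :=
  exists f : 'I_n -> color, forall u v, e u v -> f u != f v.

(* A constraint over variables X_1..X_n (indexed by 'I_n) with values in D:
   its relation is a set of tuples (total assignments 'I_n -> D). *)
Definition relation (n : nat) (D : Type) := ('I_n -> D) -> Prop.

(* Pi_W(rho), represented as the set of assignments whose restriction to W
   is the restriction to W of some tuple of rho. *)
Definition proj (n : nat) (D : Type) (rho : relation n D) (W : {set 'I_n})
  (a : 'I_n -> D) : Prop :=
  exists t, rho t /\ forall l, l \in W -> a l = t l.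

Definition S2 (n : nat) : {set {set 'I_n}} :=
  [set W : {set 'I_n} | (0 < #|W|) && (#|W| <= 2)].

Definition sol_PiS2 (n : nat) (D : Type) (rho : relation n D) (a : 'I_n -> D)
  : Prop := forall W, W \in S2 n -> proj rho W a.

Definition r_ij (n : nat) (e : rel 'I_n) (i j : 'I_n) (x y : color) : bool :=
  if e i j then x != y else true.

Definition valid_idx (n : nat) (e : rel 'I_n) (i j : 'I_n) (x y : color) : Prop :=
  (i < j)%N /\ r_ij e i j x y.

Definition rho_G (n : nat) (D : Type) (e : rel 'I_n) (col : color -> D)
  (d : 'I_n -> 'I_n -> color -> color -> D) : relation n D :=
  fun t => exists i j x y, valid_idx e i j x y /\
    forall l, t l = (if l == i then col x else if l == j then col y
                     else d i j x y).

(* Main.v *)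
From Stdlib Require Import Classical ClassicalEpsilon.
Require Import Defs.
From mathcomp Require Import all_boot.

Set Implicit Arguments. Unset Strict Implicit.
Section S.
Variables (n : nat) (e : rel 'I_n) (D : Type)
  (col : color -> D) (d : 'I_n -> 'I_n -> color -> color -> D).
Hypothesis Hinj : injective col.
Hypothesis Hd : forall i j x y i' j' x' y', valid_idx e i j x y -> valid_idx e i' j' x' y' ->
     d i j x y = d i' j' x' y' -> (i, j, x, y) = (i', j', x', y').
Hypothesis Hdc : forall i j x y c, valid_idx e i j x y -> d i j x y <> col c.

Lemma rho_sol a : rho_G e col d a -> sol_PiS2 (rho_G e col d) a.
Proof. by move=> Ha W _; exists a. Qed.

Lemma S2_1 l : [set l] \in S2 n.
Proof. by rewrite inE cards1. Qed.

Lemma S2_2 l m : l != m -> [set l; m] \in S2 n.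
Proof. by move=> H; rewrite inE cards2 H. Qed.

Lemma noncol_val a l i j x y : valid_idx e i j x y -> ~ (exists c, a l = col c) ->
  a l = (if l == i then col x else if l == j then col y else d i j x y) ->
  [/\ l != i, l != j & a l = d i j x y].
Proof.
move=> Hv Hl; case: (eqVneq l i) => [_ al|Hli]; first by case: Hl; exists x.
case: (eqVneq l j) => [_ al|Hlj]; first by case: Hl; exists y.
by [].
Qed.

Lemma noncolor_in_rho a l : sol_PiS2 (rho_G e col d) a ->
  ~ (exists c, a l = col c) -> rho_G e col d a.
Proof.
move=> Hs Hl.
case: (Hs _ (S2_1 l)) => t [[i [j [x [y [Hv Ht]]]]] Hal].
have al := Hal l (set11 l); rewrite Ht in al.
case: (noncol_val Hv Hl al) => Hli Hlj al2.
exists i, j, x, y; split=> // m.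
case: (eqVneq m l) => [->|Hml]; first by rewrite (negbTE Hli) (negbTE Hlj).
have Hlm : l != m by rewrite eq_sym.
case: (Hs _ (S2_2 Hlm)) => t' [[i' [j' [x' [y' [Hv' Ht']]]]] Hal'].
have al' := Hal' l (set21 l m); rewrite Ht' in al'.
case: (noncol_val Hv' Hl al') => _ _ al2'.
have := Hd Hv Hv'; rewrite -al2 -al2' => /(_ erefl) [Ei Ej Ex Ey]; subst i' j' x' y'.
rewrite (Hal' m (set22 l m)) Ht'.
by rewrite al2.
Qed.

Lemma col_edge a (f : 'I_n -> color) (u v : 'I_n) : sol_PiS2 (rho_G e col d) a ->
  (forall l, a l = col (f l)) -> (u < v)%N -> e u v -> f u != f v.
Proof.
move=> Hs Hf Huv Heuv.
have Hne : u != v by rewrite neq_ltn Huv.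
case: (Hs _ (S2_2 Hne)) => t [[i [j [x [y [[Hij Hr] Ht]]]]] Hal].
have au := Hal u (set21 u v); have av := Hal v (set22 u v).
rewrite Ht Hf in au; rewrite Ht Hf in av.
have Hnd : forall w c, col c = (if w == i then col x else if w == j then col y else d i j x y) ->
  (w == i) || (w == j).
  move=> w c; case: (w == i) => //; case: (w == j) => // E.
  by exfalso; apply: (Hdc (c := c) (conj Hij Hr)).
have /orP [/eqP Eui|/eqP Euj] := Hnd _ _ au; subst u.
- rewrite eqxx in au.
  have /orP [/eqP Evi|/eqP Evj] := Hnd _ _ av.
    by rewrite Evi eqxx in Hne.
  subst v; rewrite eq_sym in Hne; rewrite (negbTE Hne) eqxx in av.
  rewrite (Hinj au) (Hinj av).
  by move: Hr; rewrite /r_ij Heuv.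
- have /orP [/eqP Evi|/eqP Evj] := Hnd _ _ av.
    by subst v; move: (ltn_trans Huv Hij); rewrite ltnn.
  by subst v; rewrite eqxx in Hne.
Qed.

End S.

Theorem mainTheorem9 (n : nat) (e : rel 'I_n) (D : Type)
  (col : color -> D) (d : 'I_n -> 'I_n -> color -> color -> D) :
  (3 <= n)%N ->
  simple_graph e ->
  injective col ->
  (forall i j x y i' j' x' y', valid_idx e i j x y -> valid_idx e i' j' x' y' ->
     d i j x y = d i' j' x' y' -> (i, j, x, y) = (i', j', x', y')) ->
  (forall i j x y c, valid_idx e i j x y -> d i j x y <> col c) ->
  ((~ forall a, sol_PiS2 (rho_G e col d) a <-> rho_G e col d a) <->
   three_colorable e).
Proof.
move=> Hn [Hsym Hirr] Hinj Hd Hdc; split.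
- move=> H; apply: NNPP => Hnc; apply: H => a; split; last exact: rho_sol.
  move=> Hs.
  case: (classic (forall l, exists c, a l = col c)) => [Hall|].
    pose f l := proj1_sig (constructive_indefinite_description _ (Hall l)).
    have Hf : forall l, a l = col (f l).
      by move=> l; rewrite /f; case: (constructive_indefinite_description _ _).
    case: Hnc; exists f => u v Huv.
    case: (ltngtP u v) => [lt|lt|Eq].
    + exact: (col_edge Hinj Hdc Hs Hf lt).
    + rewrite eq_sym; apply: (col_edge Hinj Hdc Hs Hf lt); by rewrite Hsym.
    + by have /val_inj Euv := Eq; rewrite Euv Hirr in Huv.
  move/not_all_ex_not => [l Hl].
  exact: (noncolor_in_rho Hd Hs Hl).
- move=> [f Hf] H.
  pose a l := col (f l).
  have Hpair : forall u v : 'I_n, (u < v)%N -> exists t, rho_G e col d t /\ t u = a u /\ t v = a v.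
    move=> u v Huv; exists (fun l => if l == u then col (f u) else if l == v then col (f v) else d u v (f u) (f v)).
    split; last first.
      by rewrite eqxx; split => //; rewrite ifN ?eqxx // neq_ltn Huv orbT.
    exists u, v, (f u), (f v); split => //; split => //.
    by rewrite /r_ij; case E: (e u v) => //; apply: Hf.
  have Hpair' : forall u v : 'I_n, u != v -> exists t, rho_G e col d t /\ t u = a u /\ t v = a v.
    move=> u v; rewrite neq_ltn => /orP [lt|lt].
      exact: Hpair.
    have [t [? [? ?]]] := Hpair _ _ lt; by exists t.
  have Hsol : sol_PiS2 (rho_G e col d) a.
    move=> W; rewrite inE => /andP [H0 H2].
    have [u Hu] : exists u, u \in W by apply/set0Pn; rewrite -card_gt0.
    have [v [Huv HW]] : exists v, u != v /\ W \subset [set u; v].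
      case: (set_0Vmem (W :\ u)) => [E|[v Hv]].
        have [v Hv] : exists v : 'I_n, u != v.
          have H1 : (1 < n)%N by apply: leq_trans Hn.
          have H0n : (0 < n)%N by apply: leq_trans Hn.
          case: (eqVneq u (Ordinal H0n)) => [Eu|Hu0]; last by exists (Ordinal H0n).
          by exists (Ordinal H1); rewrite Eu -val_eqE.
        exists v; split => //; apply/subsetP => w Hw.
        case: (eqVneq w u) => [->|Hwu]; first by rewrite set21.
        have : w \in W :\ u by rewrite !inE Hwu Hw.
        by rewrite E inE.
      move: Hv; rewrite !inE => /andP [Hvu Hv].
      exists v; split; first by rewrite eq_sym.
      have Hs : [set u; v] \subset W.
        by apply/subsetP => w; rewrite !inE => /orP [/eqP ->|/eqP ->].
      have : [set u; v] == W by rewrite eqEcard Hs cards2 eq_sym Hvu.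
      by move/eqP <-.
    have [t [Ht [Htu Htv]]] := Hpair' _ _ Huv.
    exists t; split => // w /(subsetP HW); rewrite !inE => /orP [/eqP ->|/eqP ->]; by [].
  have : ~ rho_G e col d a.
    move=> [i [j [x [y [Hv Ht]]]]].
    have [l Hl] : exists l, l \notin [set i; j].
      apply: NNPP => Hne.
      have Hsub : [set: 'I_n] \subset [set i; j].
        apply/subsetP => l _; apply: NNPP => Hl; apply: Hne; exists l; exact/negP.
      move: (subset_leq_card Hsub); rewrite cardsT card_ord cards2 => Hle.
      by move: (leq_trans Hn Hle); case: (i != j).
    move: Hl; rewrite !inE negb_or => /andP [Hli Hlj].
    have := Ht l; rewrite (negbTE Hli) (negbTE Hlj) /a => E.
    by apply: (Hdc _ _ _ _ (f l) Hv); rewrite -E.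
  by move=> Hna; apply: Hna; apply/H.
Qed.
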